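(* Let $D=(\mathcal{S}_D,\mathcal{P}_D)$ be an abstract storage device (ASD). (i) $D$ is state-minimal if and only if for every pair of distinct states $s,s'\in\mathcal{S}_D$ there exists a partition $\pi\in\mathcal{P}_D$ with $s\not\equiv_\pi s'$; equivalently, if and only if $\bigwedge_{\pi\in\mathcal{P}_D}\pi=\mathrm{id}_{\mathcal{S}_D}$. (ii) $D$ is partition-minimal if and only if $\mathcal{P}_D$ is an antichain with respect to refinement. Furthermore, for every ASD $D$ there exists a minimal ASD $D'$ with $D'\equiv D$.
   Context: A partition $\pi$ of a set $\mathcal{S}$ is a family of disjoint subsets (blocks) with union $\mathcal{S}$; $s\equiv_\pi t$ means $s,t$ lie in the same block. $\pi$ refines $\pi'$ ($\pi\preceq\pi'$) if every block of $\pi$ is contained in a block of $\pi'$; $\wedge$ denotes the meet (the partition into nonempty pairwise intersections of blocks), and $\mathrm{id}_{\mathcal{S}}=\{\{s\}:s\in\mathcal{S}\}$. A set of partitions is an antichain if no two distinct members satisfy $\pi\preceq\pi'$. For $\phi:\mathcal{S}\to\mathcal{S}'$ and a partition $\pi$ of $\mathcal{S}'$, $\pi\circ\phi$ is the partition of $\mathcal{S}$ with $x\equiv_{\pi\circ\phi}y$ iff $\phi(x)\equiv_\pi\phi(y)$. An ASD is a pair $D=(\mathcal{S}_D,\mathcal{P}_D)$ where $\mathcal{S}_D$ is a set (state space) and $\mathcal{P}_D$ a family of partitions of $\mathcal{S}_D$; throughout, state spaces and partition sets are finite. $D$ is reducible to $D'$, written $D\le D'$, if there are functions $\phi:\mathcal{S}_D\to\mathcal{S}_{D'}$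 and $\alpha:\mathcal{P}_D\to\mathcal{P}_{D'}$ with $\alpha(\pi)\circ\phi\preceq\pi$ for all $\pi\in\mathcal{P}_D$. $D\equiv D'$ means $D\le D'$ and $D'\le D$. $D$ is state-minimal if no $D'\equiv D$ has $|\mathcal{S}_{D'}|<|\mathcal{S}_D|$, partition-minimal if no $D'\equiv D$ has $|\mathcal{P}_{D'}|<|\mathcal{P}_D|$, and minimal if both. *)

(* Defs.v *)
From mathcomp Require Import all_boot.
Set Implicit Arguments. Unset Strict Implicit. Unset Printing Implicit Defensive.

Definition same_block (T : finType) (pi : {set {set T}}) (s t : T) : bool :=
  [exists B in pi, (s \in B) && (t \in B)].

Definition refines (T : finType) (pi pi' : {set {set T}}) : Prop :=
  forall B, B \in pi -> exists2 B', B' \in pi' & B \subset B'.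

Definition pullback (T T' : finType) (pi : {set {set T'}}) (phi : T -> T')
  : {set {set T}} :=
  [set [set y | same_block pi (phi x) (phi y)] | x : T].

(* meet of a family of partitions: blocks are the nonempty intersections
   of one block from each partition, i.e. the classes of the relation
   "same block in every member" *)
Definition meet_family (T : finType) (P : {set {set {set T}}}) : {set {set T}} :=
  [set [set y | [forall pi in P, same_block pi x y]] | x : T].

Definition id_part (T : finType) : {set {set T}} := [set [set x] | x : T].

Definition antichain (T : finType) (P : {set {set {set T}}}) : Prop :=
  forall pi pi', pi \in P -> pi' \in P -> refines pi pi' -> pi = pi'.

Record ASD := mkASD {
  states : finType;
  parts : {set {set {set states}}};
  parts_partition : forall pi, pi \in parts -> partition pi [set: states]
}.

Definition reducible (D D' : ASD) : Prop :=
  exists (phi : states D -> states D')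
         (alpha : {set {set states D}} -> {set {set states D'}}),
    forall pi, pi \in parts D ->
      alpha pi \in parts D' /\ refines (pullback (alpha pi) phi) pi.

Definition asd_equiv (D D' : ASD) : Prop := reducible D D' /\ reducible D' D.

Definition state_minimal (D : ASD) : Prop :=
  ~ exists D' : ASD, asd_equiv D' D /\ #|states D'| < #|states D|.

Definition partition_minimal (D : ASD) : Prop :=
  ~ exists D' : ASD, asd_equiv D' D /\ #|parts D'| < #|parts D|.

Definition minimal (D : ASD) : Prop := state_minimal D /\ partition_minimal D.

(* Main.v *)
Require Import Defs.
From mathcomp Require Import all_boot zify.
From Stdlib Require Import Classical.
Set Implicit Arguments. Unset Strict Implicit. Unset Printing Implicit Defensive.


Section Basics.
Variable T : finType.

Lemma sbP (P : {set {set T}}) : partition P [set: T] ->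
  forall x y, same_block P x y = (y \in pblock P x).
Proof.
case/and3P=> /eqP cP tP _ x y.
have xc : x \in cover P by rewrite cP inE.
apply/existsP/idP.
  case=> B /andP [PB /andP [xB yB]]; by rewrite (def_pblock tP PB xB).
move=> yp; exists (pblock P x); rewrite pblock_mem //= yp andbT mem_pblock //.
Qed.

Lemma sb_refl (P : {set {set T}}) : partition P [set: T] -> forall x, same_block P x x.
Proof. move=> pP x; rewrite (sbP pP) mem_pblock; case/and3P: pP => /eqP -> _ _; exact: in_setT. Qed.

Lemma sb_equiv (P : {set {set T}}) : partition P [set: T] -> equivalence_rel (same_block P).
Proof.
move=> pP x y z; rewrite !(sbP pP).
have := pblock_equivalence pP (in_setT x) (in_setT y) (in_setT z). done.
Qed.

Lemma sb_sym (P : {set {set T}}) : partition P [set: T] -> forall x y,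
  same_block P x y -> same_block P y x.
Proof. move=> pP x y h. have [_ e] := sb_equiv pP x y x. by rewrite -e // sb_refl. Qed.

Lemma sb_trans (P : {set {set T}}) : partition P [set: T] -> forall x y z,
  same_block P x y -> same_block P y z -> same_block P x z.
Proof. move=> pP x y z h1 h2. have [_ e] := sb_equiv pP x y z. by rewrite e. Qed.

Lemma refines_sb (A B : {set {set T}}) : refines A B ->
  forall u v, same_block A u v -> same_block B u v.
Proof.
move=> r u v /existsP [C /andP [AC /andP [uC vC]]].
have [C' BC' sC] := r C AC. apply/existsP; exists C'.
by rewrite BC' (subsetP sC _ uC) (subsetP sC _ vC).
Qed.

Lemma sb_refines (A B : {set {set T}}) : partition A [set: T] -> partition B [set: T] ->
  (forall u v, same_block A u v -> same_block B u v) -> refines A B.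
Proof.
move=> pA pB h C AC.
have pA' := pA; case/and3P: pA' => /eqP cA tA n0.
have /set0Pn [x xC] : C != set0 by apply: contraNneq n0 => <-.
exists (pblock B x).
  apply: pblock_mem; case/and3P: pB => /eqP -> _ _; exact: in_setT.
apply/subsetP => y yC; rewrite -(sbP pB); apply: h.
by apply/existsP; exists C; rewrite AC xC yC.
Qed.

Lemma refines_trans (A B C : {set {set T}}) : refines A B -> refines B C -> refines A C.
Proof.
move=> r1 r2 X AX; have [Y BY sXY] := r1 X AX; have [Z CZ sYZ] := r2 Y BY.
by exists Z => //; apply: subset_trans sYZ.
Qed.

Lemma refines_refl (A : {set {set T}}) : refines A A.
Proof. by move=> X AX; exists X. Qed.
End Basics.

Section Pull.
Variables T T' : finType.

Lemma pullback_partition (s : {set {set T'}}) (phi : T -> T') :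
  partition s [set: T'] -> partition (pullback s phi) [set: T].
Proof.
move=> ps.
have e : equivalence_rel (fun x y => same_block s (phi x) (phi y)).
  move=> x y z; have [h1 h2] := sb_equiv ps (phi x) (phi y) (phi z); split => //.
have -> : pullback s phi = equivalence_partition (fun x y => same_block s (phi x) (phi y)) [set: T].
  apply/setP => C; apply/imsetP/imsetP => [[x _ ->]|[x _ ->]]; exists x => //;
  by apply/setP => y; rewrite !inE.
apply: equivalence_partitionP => x y z _ _ _; exact: e.
Qed.

Lemma sb_pullback (s : {set {set T'}}) (phi : T -> T') :
  partition s [set: T'] -> forall u v,
  same_block (pullback s phi) u v = same_block s (phi u) (phi v).
Proof.
move=> ps u v; rewrite (sbP (pullback_partition phi ps)).
have pp := pullback_partition phi ps.
have Cin : [set y | same_block s (phi u) (phi y)] \in pullback s phi by apply: imset_f.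
rewrite (@def_pblock _ _ [set y | same_block s (phi u) (phi y)]) ?inE //.
  by case/and3P: pp.
exact: sb_refl.
Qed.
End Pull.


Lemma red_sb (D D' : ASD) phi alpha pi :
  (forall pi, pi \in parts D -> alpha pi \in parts D' /\ refines (pullback (alpha pi) phi) pi) ->
  pi \in parts D -> forall u v, same_block (alpha pi) (phi u) (phi v) -> same_block pi u v.
Proof.
move=> h Pp u v s; have [a r] := h _ Pp.
apply: (refines_sb r); rewrite sb_pullback //; exact: parts_partition.
Qed.

Lemma red_of_sb (D D' : ASD) (phi : states D -> states D') alpha :
  (forall pi, pi \in parts D -> alpha pi \in parts D' /\
     forall u v, same_block (alpha pi) (phi u) (phi v) -> same_block pi u v) ->
  reducible D D'.
Proof.
move=> h; exists phi, alpha => pi Pp; have [a r] := h _ Pp; split => //.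
apply: sb_refines; first by apply: pullback_partition; exact: parts_partition.
  exact: parts_partition.
by move=> u v; rewrite sb_pullback; [exact: r| exact: parts_partition].
Qed.

Lemma red_trans D1 D2 D3 : reducible D1 D2 -> reducible D2 D3 -> reducible D1 D3.
Proof.
move=> [phi [alpha h]] [phi' [alpha' h']].
apply: (@red_of_sb _ _ (fun x => phi' (phi x)) (fun p => alpha' (alpha p))) => pi Pp.
have [a _] := h _ Pp; have [a' _] := h' _ a; split => // u v s.
apply: (red_sb h Pp); exact: (red_sb h' a).
Qed.

Lemma red_refl D : reducible D D.
Proof.
apply: (@red_of_sb _ _ id id) => pi Pp; split => //.
Qed.

Lemma asd_equiv_trans D1 D2 D3 : asd_equiv D1 D2 -> asd_equiv D2 D3 -> asd_equiv D1 D3.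
Proof. by move=> [a b] [c d]; split; [apply: red_trans a c | apply: red_trans d b]. Qed.

Lemma asd_equiv_sym D1 D2 : asd_equiv D1 D2 -> asd_equiv D2 D1.
Proof. by move=> [a b]; split. Qed.

Lemma asd_equiv_refl D : asd_equiv D D.
Proof. by split; apply: red_refl. Qed.


Lemma noninj (T T' : finType) (f : T -> T') : #|T'| < #|T| ->
  exists x y, x != y /\ f x = f y.
Proof.
move=> lt.
case: (boolP [exists x, exists y, (x != y) && (f x == f y)]).
  by case/existsP => x /existsP [y /andP [n /eqP e]]; exists x, y.
move=> /existsPn h; exfalso.
have inj : injective f.
  move=> x y e; apply/eqP; apply: contraT => n.
  by have /existsPn/(_ y) := h x; rewrite n e eqxx.
by have := leq_card f inj; rewrite leqNgt lt.
Qed.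

Lemma sep_sm (D : ASD) :
  (forall s s' : states D, s != s' -> exists2 pi, pi \in parts D & ~~ same_block pi s s') ->
  state_minimal D.
Proof.
move=> sep [D' [[_ [phi [alpha h]]] lt]].
have [s [s' [n e]]] := noninj phi lt.
have [pi Pp nsb] := sep _ _ n.
have [a _] := h _ Pp.
move/negP: nsb; apply; apply: (red_sb h Pp); rewrite e; apply: sb_refl; exact: parts_partition.
Qed.

Section Merge.
Variables (D : ASD) (s s' : states D).
Hypothesis n : s != s'.
Hypothesis same : forall pi, pi \in parts D -> same_block pi s s'.

Definition MT := {x : states D | x != s'}.
Definition Mparts : {set {set {set MT}}} := [set pullback pi (@sval _ _) | pi in parts D].

Lemma Mparts_partition : forall pi, pi \in Mparts -> partition pi [set: MT].
Proof. move=> p /imsetP [pi Pp ->]; apply: pullback_partition; exact: parts_partition. Qed.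

Definition MD := mkASD Mparts_partition.

Definition s0 : MT := exist _ s n.
Definition mphi (x : states D) : MT := insubd s0 x.

Lemma mphi_val x : sval (mphi x) = if x == s' then s else x.
Proof.
rewrite /mphi /insubd; case: insubP => /= [y nx ->|]; first by rewrite (negbTE nx).
by rewrite negbK => /eqP ->; rewrite eqxx.
Qed.

Lemma MD_equiv : asd_equiv MD D.
Proof.
split.
  apply: (@red_of_sb MD D (@sval _ _)
    (fun r => odflt set0 [pick pi in parts D | r == pullback pi (@sval _ _)])) => r /imsetP [pi0 P0 ->].
  case: pickP => [pi /andP [Pp /eqP e]|no] /=; last by have := no pi0; rewrite P0 eqxx.
  split => // u v; rewrite e sb_pullback //; exact: parts_partition.
apply: (@red_of_sb D MD mphi (fun pi => pullback pi (@sval _ _))) => pi Pp.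
split; first by apply: imset_f.
have pp := parts_partition Pp.
move=> u v; rewrite sb_pullback // !mphi_val => h.
have hu : same_block pi u (if u == s' then s else u).
  case: eqP => [->|_]; [apply: sb_sym => //; exact: same | exact: sb_refl].
have hv : same_block pi v (if v == s' then s else v).
  case: eqP => [->|_]; [apply: sb_sym => //; exact: same | exact: sb_refl].
apply: (sb_trans pp hu); apply: (sb_trans pp h); exact: sb_sym.
Qed.

Lemma MD_card : #|states MD| < #|states D|.
Proof.
rewrite /= /MT card_sig (cardD1 s') inE /=.
rewrite add1n ltnS; apply: subset_leq_card; apply/subsetP => x; rewrite !inE; by case: (x == s').
Qed.
End Merge.

Lemma sm_sep (D : ASD) : state_minimal D ->
  (forall s s' : states D, s != s' -> exists2 pi, pi \in parts D & ~~ same_block pi s s').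
Proof.
move=> sm s s' n.
case: (boolP [exists pi in parts D, ~~ same_block pi s s']).
  by case/existsP => pi /andP [a b]; exists pi.
move=> /existsPn h; exfalso; apply: sm.
have same : forall pi, pi \in parts D -> same_block pi s s'.
  by move=> pi Pp; have := h pi; rewrite Pp /= negbK.
exists (@MD D s'); split; [exact: (MD_equiv n same) | exact: (MD_card s')].
Qed.


Lemma meet_sep (D : ASD) :
  (forall s s' : states D, s != s' -> exists2 pi, pi \in parts D & ~~ same_block pi s s')
  <-> meet_family (parts D) = id_part (states D).
Proof.
have refl : forall x, [forall pi in parts D, same_block pi x x].
  move=> x; apply/forall_inP => pi Pp; apply: sb_refl; exact: parts_partition.
split.
  move=> sep; rewrite /meet_family /id_part; apply: eq_imset => x.
  apply/setP => y; rewrite !inE; case: (eqVneq y x) => [->|nyx]; first exact: refl.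
  have [pi Pp nsb] : exists2 pi, pi \in parts D & ~~ same_block pi x y by apply: sep; rewrite eq_sym.
  by apply/negbTE/forall_inPn; exists pi.
move=> e s s' n.
have : [set y | [forall pi in parts D, same_block pi s y]] \in id_part (states D).
  by rewrite -e; apply: imset_f.
case/imsetP => z _ ez.
have sz : s \in [set z] by rewrite -ez inE refl.
move: sz; rewrite inE => /eqP szz; subst z.
case: (boolP [forall pi in parts D, same_block pi s s']).
  move=> h; have : s' \in [set s] by rewrite -ez inE.
  by rewrite inE eq_sym (negbTE n).
by case/forall_inPn => pi Pp h; exists pi.
Qed.


Lemma pull_id_ref (T : finType) (pi : {set {set T}}) :
  partition pi [set: T] -> refines (pullback pi id) pi.
Proof.
move=> pp; apply: sb_refines => //; first exact: pullback_partition.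
by move=> u v; rewrite sb_pullback.
Qed.

Section Remove.
Variables (D : ASD) (pi pi' : {set {set states D}}).
Hypotheses (Pp : pi \in parts D) (Pp' : pi' \in parts D) (n : pi != pi') (r : refines pi pi').

Definition Rparts := parts D :\ pi'.
Lemma Rparts_partition : forall p, p \in Rparts -> partition p [set: states D].
Proof. by move=> p /setD1P [_ h]; exact: parts_partition. Qed.
Definition RD := mkASD Rparts_partition.

Lemma RD_equiv : asd_equiv RD D.
Proof.
split.
  exists id, id => p /setD1P [_ h]; split => //; idtac.
exact: (@pull_id_ref (states D) p (@parts_partition D p h)).
exists id, (fun p => if p == pi' then pi else p) => p Pq.
case: eqP => [->|ne].
  split; first by rewrite /= /Rparts in_setD1 n.
  apply: refines_trans r; apply: pull_id_ref; exact: parts_partition.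
split; first by rewrite /= /Rparts in_setD1 Pq andbT; apply/eqP.
apply: pull_id_ref; exact: parts_partition.
Qed.

Lemma RD_card : #|parts RD| < #|parts D|.
Proof. by rewrite /= /Rparts (cardsD1 pi' (parts D)) Pp'. Qed.
End Remove.

Lemma remove_ex (D : ASD) : ~ antichain (parts D) ->
  exists D', asd_equiv D' D /\ states D' = states D /\ #|parts D'| < #|parts D|.
Proof.
move=> na.
case: (boolP [exists pi in parts D, exists pi' in parts D, (pi != pi') &&
   [forall B in pi, exists B' in pi', B \subset B']]).
  case/exists_inP => pi Pp /exists_inP [pi' Pp' /andP [ne /forall_inP h]].
  have r : refines pi pi'.
    by move=> B /h /exists_inP [B' a b]; exists B'.
  exists (RD pi'); split; [exact: (RD_equiv Pp ne r) | split => //; exact: RD_card].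
move=> /exists_inPn h; exfalso; apply: na => pi pi' Pp Pp' r.
apply/eqP; apply: contraT => ne.
have := h pi Pp; move/exists_inPn => /(_ pi' Pp'); rewrite ne /=.
move/forall_inPn => [B PB /exists_inPn hB].
have [B' a b] := r B PB; by have := hB B' a; rewrite b.
Qed.


Lemma idem (X : finType) (F : X -> X) :
  exists k, 0 < k /\ forall z, iter k F (iter k F z) = iter k F z.
Proof.
pose G (i : 'I_(#|{ffun X -> X}|.+1)) := [ffun z => iter i F z].
have [i [j [nij eG]]] : exists i j, i != j /\ G i = G j by apply: noninj; rewrite card_ord.
have H : forall a b, a < b -> (forall z, iter a F z = iter b F z) ->
   exists k, 0 < k /\ forall z, iter k F (iter k F z) = iter k F z.
  move=> a b ab e; set p := b - a.
  have bp : b = p + a by rewrite /p subnK // ltnW.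
  have step : forall d z, iter (d + a + p) F z = iter (d + a) F z.
    move=> d z; by rewrite -addnA (addnC a p) -bp !iterD e.
  have mult : forall m d z, iter (d + a + m * p) F z = iter (d + a) F z.
    move=> m; elim: m => [|m IH] dd zz; first by rewrite mul0n addn0.
    have -> : dd + a + m.+1 * p = (dd + p) + a + m * p by rewrite mulSn; lia.
    rewrite IH. have -> : dd + p + a = dd + a + p by lia. exact: step.
  exists (a.+1 * p); split; first by rewrite muln_gt0 /= subn_gt0.
  move=> z; rewrite -iterD.
  have pp : 0 < p by rewrite subn_gt0.
  have -> : a.+1 * p = (a.+1 * p - a) + a by rewrite subnK // mulSn; nia.
  set d := a.+1 * p - a. have -> : d + a + (d + a) = d + a + a.+1 * p by rewrite /d subnK // mulSn; nia.
  exact: mult.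
case: (ltngtP i j) => [lt|gt|eq]; last by move: nij; rewrite (val_inj eq) eqxx.
  by apply: (H _ _ lt) => z; have /ffunP /(_ z) := eG; rewrite !ffunE.
by apply: (H _ _ gt) => z; have /ffunP /(_ z) := eG; rewrite !ffunE.
Qed.

Lemma iter_pair (A B : Type) (f : A -> A) (g : B -> B) k x y :
  iter k (fun z : A * B => (f z.1, g z.2)) (x, y) = (iter k f x, iter k g y).
Proof. by elim: k => //= k ->. Qed.

Lemma iter_omap (A : Type) (f : A -> A) k x : iter k (omap f) (Some x) = Some (iter k f x).
Proof. by elim: k => //= k ->. Qed.

Lemma noninj_in (T T' : finType) (A : {set T}) (B : {set T'}) (f : T -> T') :
  {in A, forall x, f x \in B} -> #|B| < #|A| ->
  exists x y, [/\ x \in A, y \in A, x != y & f x = f y].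
Proof.
move=> fAB lt.
case: (boolP [exists x in A, exists y in A, (x != y) && (f x == f y)]).
  by case/exists_inP => x xA /exists_inP [y yA /andP [n /eqP e]]; exists x, y.
move=> /exists_inPn h; exfalso.
have inj : {in A &, injective f}.
  move=> x y xA yA e; apply/eqP; apply: contraT => n.
  by have /exists_inPn/(_ y yA) := h x xA; rewrite n e eqxx.
have : #|f @: A| <= #|B|.
  apply: subset_leq_card; apply/subsetP => _ /imsetP [x xA ->]; exact: fAB.
by rewrite card_in_imset // leqNgt lt.
Qed.

Lemma ac_pm (D : ASD) : antichain (parts D) -> partition_minimal D.
Proof.
move=> ac [D' [[[psi [beta h']] [phi [alpha h]]] lt]].
have [p1 [p2 [P1 P2 n12 e12]]] := noninj_in (fun p (Pp : p \in parts D) => proj1 (h p Pp)) lt.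
pose f x := psi (phi x). pose g p := beta (alpha p).
have Q : forall k p, p \in parts D -> iter k g p \in parts D /\
    forall u v, same_block (iter k g p) (iter k f u) (iter k f v) -> same_block p u v.
  elim=> [|k IH] p Pp; first by split.
  have [Pk Rk] := IH p Pp.
  have [a _] := h _ Pk; have [b _] := h' _ a.
  split => // u v /=; rewrite /g /f => s; apply: Rk.
  apply: (red_sb h Pk); exact: (red_sb h' a).
have [k [k0 idk]] := idem (fun z : option (states D) * {set {set states D}} => (omap f z.1, g z.2)).
have ef : forall x, iter k f (iter k f x) = iter k f x.
  move=> x; have := idk (Some x, set0); rewrite !iter_pair !iter_omap /=; by case.
have eg : forall p, iter k g (iter k g p) = iter k g p.
  move=> p; have := idk (None, p); rewrite !iter_pair; by case.
set rho := iter k g p1.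
have Prho : rho \in parts D by have [] := Q k p1 P1.
have prho := parts_partition Prho.
have key : forall p, p \in parts D -> iter k g p = rho -> rho = p.
  move=> p Pp ep.
  have [_ Rp] := Q k p Pp; rewrite ep in Rp.
  have [_ Rr] := Q k rho Prho; rewrite /rho eg -/rho in Rr.
  have xe : forall x, same_block rho x (iter k f x).
    by move=> x; apply: Rr; rewrite ef; apply: sb_refl.
  apply: ac => //; apply: sb_refines => //; first exact: parts_partition.
  move=> u v s; apply: Rp.
  apply: (sb_trans prho _ (xe v)); apply: (sb_trans prho (sb_sym prho (xe u))) => //.
have e2 : iter k g p2 = rho.
  rewrite /rho; case: k k0 {idk ef eg Q rho Prho prho key} => // k' _.
  by rewrite !iterSr /g e12.
have r1 := key p1 P1 erefl. have r2 := key p2 P2 e2.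
by move: n12; rewrite -r1 -r2 eqxx.
Qed.


Lemma exmin (X : Type) (Q : X -> Prop) (m : X -> nat) :
  (exists x, Q x) -> exists x, Q x /\ forall y, Q y -> m x <= m y.
Proof.
move=> [x0 Qx0].
suff H : forall n x, Q x -> m x <= n -> exists x, Q x /\ forall y, Q y -> m x <= m y.
  exact: (H (m x0) x0).
elim=> [|n IH] x Qx le.
  by exists x; split => // y _; move: le; rewrite leqn0 => /eqP ->.
case: (classic (exists y, Q y /\ m y < m x)) => [[y [Qy lt]]|no].
  by apply: (IH y) => //; rewrite -ltnS (leq_trans lt).
exists x; split => // y Qy; rewrite leqNgt; apply/negP => lt; apply: no; by exists y.
Qed.

Theorem theorem1 :
  forall D : ASD,
    ((state_minimal D <->
        (forall s s' : states D, s != s' ->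
           exists2 pi, pi \in parts D & ~~ same_block pi s s'))
     /\ (state_minimal D <-> meet_family (parts D) = id_part (states D)))
    /\ (partition_minimal D <-> antichain (parts D))
    /\ (exists D' : ASD, minimal D' /\ asd_equiv D' D).
Proof.
have pm_ac : forall D, partition_minimal D <-> antichain (parts D).
  move=> D; split; last exact: ac_pm.
  move=> pm; apply: NNPP => na; have [D' [e [_ lt]]] := remove_ex na; apply: pm.
  by exists D'.
move=> D; split.
  have sm := (conj (@sm_sep D) (@sep_sm D)).
  split => //; split; [move/sm; exact: (proj1 (meet_sep D)) | move/(proj2 (meet_sep D)); exact: sep_sm].
split; first exact: pm_ac.
have [D1 [e1 min1]] := @exmin _ (fun D' => asd_equiv D' D) (fun D' => #|states D'|)
  (ex_intro (fun D' => asd_equiv D' D) D (asd_equiv_refl D)).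
have [D2 [[e2 c2] min2]] := @exmin _ (fun D' => asd_equiv D' D /\ #|states D'| = #|states D1|)
  (fun D' => #|parts D'|) (ex_intro (fun D' => asd_equiv D' D /\ #|states D'| = #|states D1|) D1 (conj e1 erefl)).
exists D2; split => //; split.
  move=> [D3 [e3 lt]]; have := min1 D3 (asd_equiv_trans e3 e2).
  by rewrite -c2 leqNgt lt.
apply/pm_ac; apply: NNPP => na; have [D3 [e3 [s3 lt]]] := remove_ex na.
have hh := min2 D3; move: lt; rewrite ltnNge hh //; split; first exact: asd_equiv_trans e3 e2.
by rewrite s3.
Qed.
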